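(* Let $\mathcal{H}$ be a Hilbert space with inner product $[\cdot,\cdot]$, $K(\mathcal{H})$ the $C^*$-algebra of compact operators on $\mathcal{H}$, and $\mathcal{E}$ a Hilbert $K(\mathcal{H})$-module. Let $x, y\in\mathcal{E}$ and suppose $\langle x,x\rangle$ is a minimal projection. Then $x\parallel y$ if and only if there exists a unit vector $\xi\in\mathcal{H}$ such that $$\big|[\langle x,y\rangle\xi,\xi]\big| = \|y\|.$$
   Context: A (left) Hilbert $K(\mathcal{H})$-module is a left $K(\mathcal{H})$-module $\mathcal{E}$ with a $K(\mathcal{H})$-valued inner product $\langle\cdot,\cdot\rangle$, linear in the first variable and conjugate linear in the second, satisfying $\langle x,x\rangle\ge 0$ with equality iff $x=0$, $\langle ax,y\rangle = a\langle x,y\rangle$ and $\langle x,y\rangle^*=\langle y,x\rangle$, and complete for the norm $\|x\|=\|\langle x,x\rangle\|^{1/2}$. A projection $P\in B(\mathcal{H})$ is minimal if $PB(\mathcal{H})P=\mathbb{C}P$; equivalently $P=\xi\otimes\xi$ for a unit vector $\xi$, where $(\xi\otimes\eta)(\zeta)=[\zeta,\eta]\xi$. $x\parallel y$ (norm-parallel) means $\|x+\lambda y\|=\|x\|+\|y\|$ for some $\lambda\in\mathbb{C}$ with $|\lambda|=1$. *)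

(* Defs.v *)
From mathcomp Require Import all_boot all_algebra.
From mathcomp Require Import complex.
From mathcomp Require Import reals.
Set Implicit Arguments. Unset Strict Implicit. Unset Printing Implicit Defensive.
Import GRing.Theory Num.Theory.
Local Open Scope ring_scope.
Local Open Scope complex_scope.

Section Hilbert.
Variable R : realType.
Local Notation C := R[i].

Section Space.
Variable H : lmodType C.
Variable ip : H -> H -> C.  (* [.,.] : linear in the first, conj. linear in the second *)

Definition hnorm (xi : H) : R := Num.sqrt (complex.Re (ip xi xi)).

Definition is_cauchy_seq (V : Type) (nrm : V -> R) (sub : V -> V -> V)
  (u : nat -> V) : Prop :=
  forall e : R, 0 < e -> exists N : nat, forall m n : nat,
    (N <= m)%N -> (N <= n)%N -> nrm (sub (u m) (u n)) < e.

Definition seq_converges_to (V : Type) (nrm : V -> R) (sub : V -> V -> V)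
  (u : nat -> V) (l : V) : Prop :=
  forall e : R, 0 < e -> exists N : nat, forall n : nat,
    (N <= n)%N -> nrm (sub (u n) l) < e.

Definition is_hilbert : Prop :=
  [/\ (forall (a : C) (x y z : H), ip (a *: x + y) z = a * ip x z + ip y z),
      (forall x y : H, ip y x = (ip x y)^*),
      (forall x : H, 0 <= ip x x),
      (forall x : H, ip x x = 0 -> x = 0) &
      (forall u : nat -> H, is_cauchy_seq hnorm (fun a b => a - b) u ->
         exists l : H, seq_converges_to hnorm (fun a b => a - b) u l)].

Definition is_linear_op (T : H -> H) : Prop :=
  forall (a : C) (x y : H), T (a *: x + y) = a *: T x + T y.

Definition is_bounded_op (T : H -> H) : Prop :=
  is_linear_op T /\ exists M : R, forall x : H, hnorm (T x) <= M * hnorm x.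

Definition opnorm (T : H -> H) : R :=
  sup (fun r : R => exists xi : H, hnorm xi <= 1 /\ r = hnorm (T xi)).

Definition is_compact_op (T : H -> H) : Prop :=
  is_bounded_op T /\
  forall u : nat -> H, (exists M : R, forall n, hnorm (u n) <= M) ->
    exists phi : nat -> nat, (forall n, (phi n < phi n.+1)%N) /\
      exists l : H, seq_converges_to hnorm (fun a b => a - b) (fun n => T (u (phi n))) l.

Definition is_adjoint_of (T S : H -> H) : Prop :=
  forall xi eta : H, ip (T xi) eta = ip xi (S eta).

Definition is_positive_op (T : H -> H) : Prop :=
  forall xi : H, 0 <= ip (T xi) xi.

Definition is_projection (P : H -> H) : Prop :=
  is_bounded_op P /\ (forall xi, P (P xi) = P xi) /\ is_adjoint_of P P.

Definition is_minimal_projection (P : H -> H) : Prop :=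
  [/\ is_projection P,
      (exists xi : H, P xi <> 0) &
      (forall T : H -> H, is_bounded_op T ->
         exists c : C, forall xi : H, P (T (P xi)) = c *: P xi)].

Section Module.
Variable E : lmodType C.
Variable act : (H -> H) -> E -> E.
Variable eip : E -> E -> (H -> H).

Definition enorm (x : E) : R := Num.sqrt (opnorm (eip x x)).

Definition is_hilbert_KH_module : Prop :=
      (forall a : H -> H, is_compact_op a -> forall x y : E,
          act a (x + y) = act a x + act a y) /\
      (forall a b : H -> H, is_compact_op a -> is_compact_op b -> forall x : E,
          act (fun xi => a xi + b xi) x = act a x + act b x) /\
      (forall a b : H -> H, is_compact_op a -> is_compact_op b -> forall x : E,
          act (fun xi => a (b xi)) x = act a (act b x)) /\
      (forall a : H -> H, is_compact_op a -> forall (c : C) (x : E),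
          act (fun xi => c *: a xi) x = c *: act a x /\ act a (c *: x) = c *: act a x) /\
      (forall x y : E, is_compact_op (eip x y)) /\
      (forall (c : C) (x y z : E) (xi : H),
          eip (c *: x + y) z xi = c *: eip x z xi + eip y z xi) /\
      (forall (c : C) (x y z : E) (xi : H),
          eip z (c *: x + y) xi = c^* *: eip z x xi + eip z y xi) /\
      (forall x : E, is_positive_op (eip x x)) /\
      (forall x : E, (forall xi, eip x x xi = 0) -> x = 0) /\
      (forall a : H -> H, is_compact_op a -> forall (x y : E) (xi : H),
          eip (act a x) y xi = a (eip x y xi)) /\
      (forall x y : E, is_adjoint_of (eip y x) (eip x y)) /\
      (forall u : nat -> E, is_cauchy_seq enorm (fun a b => a - b) u ->
         exists l : E, seq_converges_to enorm (fun a b => a - b) u l).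

Definition norm_parallel (x y : E) : Prop :=
  exists lambda : C, `|lambda| = 1 /\ enorm (x + lambda *: y) = enorm x + enorm y.

End Module.
End Space.
End Hilbert.

(* Main.v *)
Require Import Defs.
From mathcomp Require Import all_boot all_algebra.
From mathcomp Require Import complex.
From mathcomp Require Import reals.
From mathcomp Require Import all_order classical_sets.
From mathcomp Require Import ring lra.
Set Implicit Arguments. Unset Strict Implicit. Unset Printing Implicit Defensive.
Import Order.TTheory GRing.Theory Num.Theory.
Local Open Scope ring_scope.
Local Open Scope complex_scope.
Local Notation Rc := complex.Re.
Local Notation Ic := complex.Im.

Definition nrm2 (R : realType) (z : R[i]) : R := Rc z ^+ 2 + Ic z ^+ 2.

Lemma nrm2_ge0 (R : realType) (z : R[i]) : 0 <= nrm2 z.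
Proof. rewrite /nrm2; nra. Qed.

Lemma nrm2M (R : realType) (a b : R[i]) : nrm2 (a * b) = nrm2 a * nrm2 b.
Proof. case: a => a1 a2; case: b => b1 b2; rewrite /nrm2 /=; ring. Qed.

Lemma nrm2J (R : realType) (a : R[i]) : nrm2 (a^*) = nrm2 a.
Proof. case: a => a1 a2; rewrite /nrm2 /=; ring. Qed.

Lemma normc_nrm2 (R : realType) (a : R[i]) : `|a| = (Num.sqrt (nrm2 a))%:C.
Proof. exact: normc_def. Qed.

Lemma real_key (R : realType) (K A D : R) : 0 <= K -> 0 <= A -> 0 <= D ->
  (forall t : R, 0 <= t ^+ 2 * K * A - 2 * t * K + D) -> K <= A * D.
Proof.
move=> K0 A0 D0 h.
have [Ap|] := ltrP 0 A.
  have := h A^-1.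
  have e : A * A^-1 = 1 by rewrite mulfV // lt0r_neq0.
  have iA0 : 0 < A^-1 by rewrite invr_gt0.
  move=> h1.
  have h2 : 0 <= A * (A^-1 ^+ 2 * K * A - 2 * A^-1 * K + D) by apply: mulr_ge0 => //; lra.
  have e2 : A * (A^-1 ^+ 2 * K * A - 2 * A^-1 * K + D) = (A * A^-1)^+2 * K - 2 * (A * A^-1) * K + A * D by ring.
  move: h2; rewrite e2 e; lra.
move=> Ale; have A00 : A = 0 by lra.
subst A; rewrite mul0r.
have [Kp|] := ltrP 0 K; last by lra.
have := h ((D + 1) * K^-1).
have e : (D + 1) * K^-1 * K = D + 1 by rewrite -mulrA mulVf ?mulr1 // lt0r_neq0.
have e2 : ((D + 1) * K^-1) ^+ 2 * K * 0 - 2 * ((D + 1) * K^-1) * K + D = - 2 * ((D + 1) * K^-1 * K) + D by ring.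
rewrite e2 e; lra.
Qed.

Section Form.
Variable R : realType.
Local Notation C := R[i].
Variable V : lmodType C.
Variable s : V -> V -> C.
Hypothesis s_lin : forall (a : C) (u v w : V), s (a *: u + v) w = a * s u w + s v w.
Hypothesis s_sym : forall u v, s v u = (s u v)^*.
Hypothesis s_pos : forall u, 0 <= s u u.

Lemma s0l w : s 0 w = 0.
Proof.
have := s_lin (-1) w w w.
by rewrite scaleN1r addNr mulN1r addNr.
Qed.

Lemma slD u v w : s (u + v) w = s u w + s v w.
Proof. by have := s_lin 1 u v w; rewrite scale1r mul1r. Qed.

Lemma slZ a u w : s (a *: u) w = a * s u w.
Proof. by have := s_lin a u 0 w; rewrite addr0 s0l addr0. Qed.

Lemma srD u v w : s w (u + v) = s w u + s w v.
Proof. by rewrite s_sym slD rmorphD /= -!s_sym. Qed.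

Lemma srZ a u w : s w (a *: u) = a^* * s w u.
Proof. by rewrite s_sym slZ rmorphM /= -s_sym. Qed.

Lemma slN u w : s (- u) w = - s u w.
Proof. by rewrite -scaleN1r slZ mulN1r. Qed.

Lemma srN u w : s w (- u) = - s w u.
Proof. by rewrite s_sym slN rmorphN /= -s_sym. Qed.

Definition Qf u := Rc (s u u).

Lemma Qf_ge0 u : 0 <= Qf u.
Proof. by have := s_pos u; rewrite lecE => /andP[]. Qed.

Lemma s_uu u : s u u = (Qf u)%:C.
Proof.
have := s_pos u; rewrite lecE /Qf => /andP[/eqP h _].
by case: (s u u) h => a b /= ->.
Qed.

Lemma QfZ a u : Qf (a *: u) = nrm2 a * Qf u.
Proof.
rewrite /Qf slZ srZ mulrA s_uu /nrm2.
case: a => a1 a2 /=; ring.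
Qed.

Lemma QfD u v : Qf (u + v) = Qf u + Qf v + 2 * Rc (s u v).
Proof.
rewrite /Qf slD !srD (s_sym u v) /=.
case: (s u u) => ? ?; case: (s v v) => ? ?; case: (s u v) => ? ? /=; ring.
Qed.

Lemma CS u v : nrm2 (s u v) <= Qf u * Qf v.
Proof.
apply: real_key; [exact: nrm2_ge0|exact: Qf_ge0|exact: Qf_ge0|].
move=> t.
have := Qf_ge0 ((- (t%:C * (s u v)^*)) *: u + v).
rewrite /Qf slD !slZ !srD !srZ (s_sym u v) !s_uu /nrm2.
case: (s u v) => c1 c2 /=.
move=> h; rewrite /= in h; nra.
Qed.

Lemma Re_le_sqrt_nrm2 (c : C) : Rc c <= Num.sqrt (nrm2 c).
Proof.
have [h|h] := lerP (Rc c) 0.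
  exact: le_trans h (sqrtr_ge0 _).
rewrite -(ger0_norm (ltW h)) -sqrtr_sqr ler_sqrt /nrm2; last by nra.
nra.
Qed.

Lemma sqrt_nrm2_le u v : Num.sqrt (nrm2 (s u v)) <= Num.sqrt (Qf u) * Num.sqrt (Qf v).
Proof. by rewrite -sqrtrM ?Qf_ge0 // ler_sqrt ?CS // mulr_ge0 // Qf_ge0. Qed.

Lemma Mink u v : Qf (u + v) <= (Num.sqrt (Qf u) + Num.sqrt (Qf v)) ^+ 2.
Proof.
rewrite QfD.
have h1 := le_trans (Re_le_sqrt_nrm2 (s u v)) (sqrt_nrm2_le u v).
have e1 := sqr_sqrtr (Qf_ge0 u). have e2 := sqr_sqrtr (Qf_ge0 v).
set a := Num.sqrt (Qf u) in h1 e1 *. set b := Num.sqrt (Qf v) in h1 e2 *.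
nra.
Qed.

End Form.

Section Hilb.
Variable R : realType.
Local Notation C := R[i].
Variable H : lmodType C.
Variable ip : H -> H -> C.
Hypothesis hH : is_hilbert ip.

Lemma ip_lin : forall (a : C) (x y z : H), ip (a *: x + y) z = a * ip x z + ip y z.
Proof. by case: hH. Qed.
Lemma ip_sym : forall x y : H, ip y x = (ip x y)^*.
Proof. by case: hH. Qed.
Lemma ip_pos : forall x : H, 0 <= ip x x.
Proof. by case: hH. Qed.
Lemma ip_def : forall x : H, ip x x = 0 -> x = 0.
Proof. by case: hH. Qed.

Local Notation hn := (hnorm ip).

Lemma hn_ge0 xi : 0 <= hn xi.
Proof. exact: sqrtr_ge0. Qed.

Lemma hn_sq xi : hn xi ^+ 2 = Qf ip xi.
Proof. by rewrite /hnorm sqr_sqrtr // (Qf_ge0 ip_pos). Qed.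

Lemma hnZ a xi : hn (a *: xi) = Num.sqrt (nrm2 a) * hn xi.
Proof. have := QfZ ip_lin ip_sym ip_pos a xi; rewrite /Qf /hnorm => ->; by rewrite sqrtrM // nrm2_ge0. Qed.

Lemma Qf0_eq0 xi : Qf ip xi = 0 -> xi = 0.
Proof. by move=> h; apply: ip_def; rewrite (s_uu ip_pos) h. Qed.

Lemma hn0_eq0 xi : hn xi = 0 -> xi = 0.
Proof.
move=> h; apply: Qf0_eq0; rewrite -hn_sq h; by rewrite expr0n.
Qed.

Lemma hn0 : hn 0 = 0.
Proof.
rewrite /hnorm (s0l ip_lin).
have -> : Rc (0 : C) = 0 by [].
exact: sqrtr0.
Qed.

Lemma ip_ext u v : (forall eta, ip u eta = ip v eta) -> u = v.
Proof.
move=> h; apply/eqP; rewrite -subr_eq0; apply/eqP; apply: ip_def.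
by rewrite (slD ip_lin) (slN ip_lin) h addrN.
Qed.

Lemma ip_CS u v : Num.sqrt (nrm2 (ip u v)) <= hn u * hn v.
Proof. exact: (sqrt_nrm2_le ip_lin ip_sym ip_pos). Qed.

Section Op.
Variable T : H -> H.
Hypothesis Tlin : is_linear_op T.

Lemma T0 : T 0 = 0.
Proof. by have := Tlin (-1) 0 0; rewrite scaleN1r oppr0 addr0 scaleN1r addNr. Qed.
Lemma TD u v : T (u + v) = T u + T v.
Proof. by have := Tlin 1 u v; rewrite !scale1r. Qed.
Lemma TZ a u : T (a *: u) = a *: T u.
Proof. by have := Tlin a u 0; rewrite !addr0 T0 addr0. Qed.
Lemma TN u : T (- u) = - T u.
Proof. by rewrite -scaleN1r TZ scaleN1r. Qed.
End Op.

Definition opset (T : H -> H) := fun r : R => exists xi : H, hn xi <= 1 /\ r = hn (T xi).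

Lemma opset_sup (T : H -> H) (M : R) : (forall xi, hn (T xi) <= M * hn xi) ->
  has_sup (opset T).
Proof.
move=> hM; split; first by exists (hn (T 0)), 0; split => //; rewrite hn0 ler01.
have [hm|hm] := lerP 0 M.
  exists M => r [xi [h1 ->]]; apply: (le_trans (hM xi)); rewrite -[X in _ <= X]mulr1; exact: ler_wpM2l.
exists 0 => r [xi [h1 ->]]; apply: (le_trans (hM xi)); apply: mulr_le0_ge0; [exact: ltW|exact: hn_ge0].
Qed.

Lemma opn_ub (T : H -> H) (M : R) : (forall xi, hn (T xi) <= M * hn xi) ->
  forall xi, hn xi <= 1 -> hn (T xi) <= opnorm ip T.
Proof.
move=> hM xi h; have := sup_upper_bound (opset_sup hM); apply; by exists xi.
Qed.

Lemma opn_le (T : H -> H) (w : R) : (forall xi, hn xi <= 1 -> hn (T xi) <= w) ->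
  opnorm ip T <= w.
Proof.
move=> h; apply: ge_sup; first by exists (hn (T 0)), 0; split => //; rewrite hn0 ler01.
by move=> r [xi [h1 ->]]; apply: h.
Qed.

Lemma opn_ge0 (T : H -> H) (M : R) : (forall xi, hn (T xi) <= M * hn xi) -> 0 <= opnorm ip T.
Proof.
move=> hM; apply: le_trans (opn_ub hM (xi := 0) _); first exact: hn_ge0.
by rewrite hn0 ler01.
Qed.

Lemma opn_hom (T : H -> H) (M : R) : is_linear_op T -> (forall xi, hn (T xi) <= M * hn xi) ->
  forall xi, hn (T xi) <= opnorm ip T * hn xi.
Proof.
move=> Tl hM xi.
have [h0|hp] := eqVneq (hn xi) 0.
  by rewrite h0 mulr0 (hn0_eq0 h0) (T0 Tl) hn0.
have hp' : 0 < hn xi by rewrite lt_def hp hn_ge0.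
have := opn_ub hM (xi := ((hn xi)^-1)%:C *: xi).
rewrite (TZ Tl) !hnZ.
have e : Num.sqrt (nrm2 ((hn xi)^-1)%:C) = (hn xi)^-1.
  by rewrite /nrm2 /= expr0n /= addr0 sqrtr_sqr ger0_norm // invr_ge0 ltW.
rewrite e mulVf ?lexx // => /(_ isT) h.
have h2 := ler_wpM2r (ltW hp') h.
by rewrite [X in X <= _]mulrC mulrA mulfV // mul1r in h2.
Qed.

Lemma numrad (T : H -> H) (w : R) : is_linear_op T -> is_adjoint_of ip T T ->
  (forall xi, 0 <= ip (T xi) xi) -> 0 <= w ->
  (forall xi, Rc (ip (T xi) xi) <= w * hn xi ^+ 2) -> opnorm ip T <= w.
Proof.
move=> Tl Ta Tp w0 hw; apply: opn_le => xi hxi.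
pose sT u v := ip (T u) v.
have sl : forall (a : C) (u v z : H), sT (a *: u + v) z = a * sT u z + sT v z.
  by move=> a u v z; rewrite /sT Tl ip_lin.
have ss : forall u v, sT v u = (sT u v)^*.
  by move=> u v; rewrite /sT Ta ip_sym.
have cs := CS sl ss Tp xi (T xi).
have e1 : sT xi (T xi) = (hn (T xi) ^+ 2)%:C by rewrite /sT hn_sq (s_uu ip_pos).
rewrite e1 /nrm2 /= expr0n /= addr0 in cs.
have q1 : Qf sT xi <= w * hn xi ^+ 2 := hw xi.
have q2 : Qf sT (T xi) <= w * hn (T xi) ^+ 2 := hw (T xi).
have g1 : 0 <= Qf sT xi by apply: Qf_ge0.
have g2 : 0 <= Qf sT (T xi) by apply: Qf_ge0.
have h0 := hn_ge0 xi. have r0 := hn_ge0 (T xi).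
set r := hn (T xi) in cs q2 r0 *. set h := hn xi in q1 hxi h0.
have hh : h ^+ 2 <= 1 by nra.
have a0 : w * h ^+ 2 <= w by rewrite -[X in _ <= X]mulr1; apply: ler_wpM2l.
have a1 : Qf sT xi <= w by apply: le_trans q1 a0.
have : (r ^+ 2) ^+ 2 <= w * (w * r ^+ 2).
  apply: le_trans cs _; apply: ler_pM => //; nra.
move=> hr; rewrite leNgt; apply/negP => hlt.
have p1 : w ^+ 2 < r ^+ 2 by rewrite ltr_pXn2r // ?nnegrE //; lra.
have p2 : 0 < r ^+ 2 by rewrite exprn_gt0 //; lra.
have p3 : w ^+ 2 * r ^+ 2 < r ^+ 2 * r ^+ 2 by rewrite ltr_pM2r.
have e3 : (r ^+ 2) ^+ 2 = r ^+ 2 * r ^+ 2 by rewrite expr2.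
have e4 : w * (w * r ^+ 2) = w ^+ 2 * r ^+ 2 by rewrite expr2 mulrA.
rewrite e3 e4 in hr; lra.
Qed.

End Hilb.

Section Mod.
Variable R : realType.
Local Notation C := R[i].
Variable H : lmodType C.
Variable ip : H -> H -> C.
Hypothesis hH : is_hilbert ip.
Variable E : lmodType C.
Variable act : (H -> H) -> E -> E.
Variable eip : E -> E -> (H -> H).
Hypothesis hE : is_hilbert_KH_module ip act eip.

Local Notation hn := (hnorm ip).
Local Notation en := (enorm ip eip).

Lemma eip_comp : forall x y : E, is_compact_op ip (eip x y).
Proof. by case: hE => [_ [_ [_ [_ [h _]]]]]. Qed.
Lemma eip_linl : forall (c : C) (x y z : E) (xi : H),
          eip (c *: x + y) z xi = c *: eip x z xi + eip y z xi.
Proof. by case: hE => [_ [_ [_ [_ [_ [h _]]]]]]. Qed.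
Lemma eip_pos : forall x : E, is_positive_op ip (eip x x).
Proof. by case: hE => [_ [_ [_ [_ [_ [_ [_ [h _]]]]]]]]. Qed.
Lemma eip_def : forall x : E, (forall xi, eip x x xi = 0) -> x = 0.
Proof. by case: hE => [_ [_ [_ [_ [_ [_ [_ [_ [h _]]]]]]]]]. Qed.
Lemma eip_act : forall a : H -> H, is_compact_op ip a -> forall (x y : E) (xi : H),
          eip (act a x) y xi = a (eip x y xi).
Proof. by case: hE => [_ [_ [_ [_ [_ [_ [_ [_ [_ [h _]]]]]]]]]]. Qed.
Lemma eip_adj : forall x y : E, is_adjoint_of ip (eip y x) (eip x y).
Proof. by case: hE => [_ [_ [_ [_ [_ [_ [_ [_ [_ [_ [h _]]]]]]]]]]]. Qed.

Lemma eip_lin x y : is_linear_op (eip x y).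
Proof. by case: (eip_comp x y) => [[]]. Qed.
Lemma eip_bnd x y : exists M, forall xi, hn (eip x y xi) <= M * hn xi.
Proof. by case: (eip_comp x y) => [[]]. Qed.

Definition sx (xi : H) (u v : E) := ip (eip u v xi) xi.

Lemma sx_lin xi : forall (a : C) (u v w : E), sx xi (a *: u + v) w = a * sx xi u w + sx xi v w.
Proof. by move=> a u v w; rewrite /sx eip_linl (ip_lin hH). Qed.
Lemma sx_sym xi : forall u v, sx xi v u = (sx xi u v)^*.
Proof. by move=> u v; rewrite /sx eip_adj (ip_sym hH). Qed.
Lemma sx_pos xi : forall u, 0 <= sx xi u u.
Proof. by move=> u; apply: eip_pos. Qed.

Lemma en_ge0 u : 0 <= en u.
Proof. exact: sqrtr_ge0. Qed.

Lemma opn_eip_ge0 u v : 0 <= opnorm ip (eip u v).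
Proof. by case: (eip_bnd u v) => M hM; apply: (opn_ge0 hH hM). Qed.

Lemma en_sq u : en u ^+ 2 = opnorm ip (eip u u).
Proof. by rewrite /enorm sqr_sqrtr // opn_eip_ge0. Qed.

Lemma sx_le xi u : Qf (sx xi) u <= en u ^+ 2 * hn xi ^+ 2.
Proof.
rewrite /Qf /sx en_sq.
apply: le_trans (Re_le_sqrt_nrm2 _) _.
apply: le_trans (ip_CS hH _ _) _.
case: (eip_bnd u u) => M hM.
have := opn_hom hH (eip_lin u u) hM xi.
have := hn_ge0 ip xi.
move=> h0 h1; rewrite expr2 mulrA; apply: ler_wpM2r => //.
Qed.

Lemma en_le u (w : R) : 0 <= w -> (forall xi, Qf (sx xi) u <= w * hn xi ^+ 2) ->
  en u ^+ 2 <= w.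
Proof.
move=> w0 hw; rewrite en_sq; apply: (numrad hH (eip_lin u u) (eip_adj u u) (eip_pos u) w0).
exact: hw.
Qed.

Lemma sqrt_le_mul (q e h : R) : 0 <= e -> 0 <= h -> q <= e ^+ 2 * h ^+ 2 ->
  Num.sqrt q <= e * h.
Proof.
move=> e0 h0 hq.
have [q0|q0] := lerP 0 q.
  by rewrite -(ger0_norm (mulr_ge0 e0 h0)) -sqrtr_sqr ler_sqrt ?sqr_ge0 // exprMn.
by rewrite ltr0_sqrtr // mulr_ge0.
Qed.

Lemma sq_le (a b : R) : 0 <= a -> 0 <= b -> a ^+ 2 <= b ^+ 2 -> a <= b.
Proof. move=> a0 b0 h; rewrite leNgt; apply/negP => hlt; nra. Qed.

Lemma triangle u v (l : C) : nrm2 l = 1 -> en (u + l *: v) <= en u + en v.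
Proof.
move=> hl.
have s0 : 0 <= en u + en v by apply: addr_ge0; apply: en_ge0.
have : en (u + l *: v) ^+ 2 <= (en u + en v) ^+ 2.
  apply: en_le; first exact: sqr_ge0.
  move=> xi.
  apply: le_trans (Mink (sx_lin xi) (sx_sym xi) (sx_pos xi) u (l *: v)) _.
  rewrite (QfZ (sx_lin xi) (sx_sym xi) (sx_pos xi)) hl mul1r.
  have a1 := sqrt_le_mul (en_ge0 u) (hn_ge0 ip xi) (sx_le xi u).
  have a2 := sqrt_le_mul (en_ge0 v) (hn_ge0 ip xi) (sx_le xi v).
  have b1 := sqrtr_ge0 (Qf (sx xi) u). have b2 := sqrtr_ge0 (Qf (sx xi) v).
  have := hn_ge0 ip xi. have := en_ge0 u. have := en_ge0 v.
  set p := Num.sqrt _ in a1 b1. set q := Num.sqrt _ in a2 b2.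
  move=> g1 g2 g3.
  have c1 : p + q <= (en u + en v) * hn xi by lra.
  have c0 : 0 <= p + q by lra.
  rewrite -exprMn !expr2; apply: ler_pM => //.
move=> h; apply: sq_le => //; exact: en_ge0.
Qed.

End Mod.

Lemma final_real (R : realType) (A z G b Y : R) : 0 <= A -> 0 <= z -> 0 <= G -> 0 <= b -> b < Y ->
  G ^+ 2 <= z ^+ 2 * (Y ^+ 2 - b ^+ 2) ->
  A ^+ 2 + Y ^+ 2 * (A ^+ 2 + z ^+ 2) + 2 * ((A * b + G) * A) <=
  ((1 + Y) ^+ 2 - (Y - b) / 2) * (A ^+ 2 + z ^+ 2).
Proof.
move=> A0 z0 G0 b0 bY hG.
set d := Y - b.
have d0 : 0 < d by rewrite /d; lra.
set k := 3 * d / 2.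
have k0 : 0 < k by rewrite /k; lra.
have h1 : 2 * A * G * k <= k ^+ 2 * A ^+ 2 + G ^+ 2.
  have := sqr_ge0 (k * A - G); nra.
have h2 : G ^+ 2 <= z ^+ 2 * (d * (2 * Y - d)).
  by apply: le_trans hG _; rewrite /d; apply: ler_wpM2l; [exact: sqr_ge0|nra].
have h3 : z ^+ 2 * (d * (2 * Y - d)) <= k * (1 + 2 * Y - d / 2) * z ^+ 2.
  have e : k * (1 + 2 * Y - d / 2) - d * (2 * Y - d) = d * (3 / 2 + Y + d / 4).
    by rewrite /k; field.
  have : 0 <= d * (3 / 2 + Y + d / 4) * z ^+ 2.
    apply: mulr_ge0; last exact: sqr_ge0.
    apply: mulr_ge0; first lra. rewrite /d; lra.
  rewrite -e; nra.
have h4 : k * (2 * A * G) <= k * (k * A ^+ 2 + (1 + 2 * Y - d / 2) * z ^+ 2).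
  have -> : k * (k * A ^+ 2 + (1 + 2 * Y - d / 2) * z ^+ 2) = k ^+ 2 * A ^+ 2 + k * (1 + 2 * Y - d / 2) * z ^+ 2 by ring.
  lra.
have h5 : 2 * A * G <= k * A ^+ 2 + (1 + 2 * Y - d / 2) * z ^+ 2.
  by rewrite -(ler_pM2l k0).
have e3 : ((1 + Y) ^+ 2 - (Y - b) / 2) * (A ^+ 2 + z ^+ 2) - (A ^+ 2 + Y ^+ 2 * (A ^+ 2 + z ^+ 2) + 2 * ((A * b + G) * A))
  = k * A ^+ 2 + (1 + 2 * Y - d / 2) * z ^+ 2 - 2 * A * G by rewrite /k /d; field.
by rewrite -subr_ge0 e3 subr_ge0.
Qed.

Lemma limit_real (R : realType) (g K M : R) : 0 <= K ->
  (forall t, 0 < t -> g <= K * t ^+ 2 + M) -> g <= M.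
Proof.
move=> K0 h; rewrite leNgt; apply/negP => hlt.
set e := g - M.
have e0 : 0 < e by rewrite /e; lra.
set t := e / (K + e + 1).
have q0 : 0 < K + e + 1 by lra.
have te : t * (K + e + 1) = e by rewrite /t divfK // lt0r_neq0.
have t0 : 0 < t by rewrite /t divr_gt0.
have t1 : t <= 1 by nra.
have Kt : K * t < e by nra.
have Kt2 : K * t ^+ 2 <= K * t by rewrite expr2 mulrA; rewrite -[X in _ <= X]mulr1; apply: ler_wpM2l => //; apply: mulr_ge0 => //; lra.
have := h t t0; rewrite /e in Kt; lra.
Qed.

Lemma G_real (R : realType) (g b2 Y z2 s : R) : 0 < Y -> b2 < Y ^+ 2 -> 0 <= g -> 0 <= b2 -> 0 <= z2 ->
  s * (Y ^+ 2 - b2) = 1 ->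
  g * (1 + s * b2) ^+ 2 <= Y ^+ 2 * (s ^+ 2 * g * b2 + z2) -> g <= z2 * (Y ^+ 2 - b2).
Proof.
move=> Y0 bY g0 b0 z0 hs h.
have e1 : 1 + s * b2 = s * Y ^+ 2 by lra.
rewrite e1 in h.
have s0 : 0 < s.
  have D0 : 0 < Y ^+ 2 - b2 by lra.
  rewrite ltNge; apply/negP => hs0; nra.
have h2 : Y ^+ 2 * (g * s * (s * (Y ^+ 2 - b2))) <= Y ^+ 2 * z2.
  have -> : Y ^+ 2 * (g * s * (s * (Y ^+ 2 - b2))) = g * (s * Y ^+ 2) ^+ 2 - Y ^+ 2 * (s ^+ 2 * g * b2) by ring.
  lra.
rewrite hs mulr1 in h2.
have Y2 : 0 < Y ^+ 2 by rewrite exprn_gt0.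
have h3 : g * s <= z2 by rewrite -(ler_pM2l Y2).
have : g * s * (Y ^+ 2 - b2) <= z2 * (Y ^+ 2 - b2) by apply: ler_wpM2r => //; lra.
by rewrite -mulrA hs mulr1.
Qed.

Lemma nrm2C (R : realType) (r : R) : nrm2 (r%:C) = r ^+ 2.
Proof. by rewrite /nrm2 /= expr0n /= addr0. Qed.

Lemma nrm2_eq0 (R : realType) (c : R[i]) : nrm2 c = 0 -> c = 0.
Proof.
case: c => p q; rewrite /nrm2 /= => h.
have p0 : p = 0 by nra.
have q0 : q = 0 by nra.
by rewrite p0 q0.
Qed.

Lemma ident_c (R : realType) (s : R) (c d : R[i]) :
  (s%:C * c * d^*) * d + c = c * (1 + s * nrm2 d)%:C.
Proof.
case: c => c1 c2; case: d => d1 d2; rewrite /nrm2 /=.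
congr (_ +i* _); ring.
Qed.

Lemma sqrt_nrm2_D (R : realType) (u v : R[i]) :
  Num.sqrt (nrm2 (u + v)) <= Num.sqrt (nrm2 u) + Num.sqrt (nrm2 v).
Proof.
have := ler_normD u v.
by rewrite !normc_nrm2 -raddfD /= lecR.
Qed.

Section Main.
Variable R : realType.
Local Notation C := R[i].
Variable H : lmodType C.
Variable ip : H -> H -> C.
Hypothesis hH : is_hilbert ip.
Variable E : lmodType C.
Variable act : (H -> H) -> E -> E.
Variable eip : E -> E -> (H -> H).
Hypothesis hE : is_hilbert_KH_module ip act eip.
Variable x : E.
Hypothesis hx : is_minimal_projection ip (eip x x).

Local Notation hn := (hnorm ip).
Local Notation en := (enorm ip eip).
Local Notation P := (eip x x).

Lemma P_idem xi : P (P xi) = P xi.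
Proof. by case: hx => [[_ [h _]] _ _]. Qed.
Lemma P_adj u v : ip (P u) v = ip u (P v).
Proof. exact: (eip_adj hE). Qed.
Lemma P_nz : exists xi, P xi <> 0.
Proof. by case: hx. Qed.
Lemma P_min : forall T : H -> H, is_bounded_op ip T ->
         exists c : C, forall xi : H, P (T (P xi)) = c *: P xi.
Proof. by case: hx. Qed.
Lemma P_lin : is_linear_op P.
Proof. exact: (eip_lin hE). Qed.

Lemma hnP_le xi : hn (P xi) <= hn xi.
Proof.
have e : hn (P xi) ^+ 2 = Rc (ip xi (P xi)).
  by rewrite (hn_sq hH) /Qf P_adj P_idem.
have h1 := le_trans (Re_le_sqrt_nrm2 _) (ip_CS hH xi (P xi)).
rewrite -e in h1.
have := hn_ge0 ip xi. have := hn_ge0 ip (P xi).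
set r := hn (P xi) in h1 *. set h := hn xi in h1 *.
move=> r0 h0; rewrite leNgt; apply/negP => hlt; nra.
Qed.

Lemma opnP_le1 : opnorm ip P <= 1.
Proof. apply: (opn_le hH) => xi h; exact: le_trans (hnP_le xi) h. Qed.

Lemma enx_le1 : en x <= 1.
Proof. by rewrite /enorm -sqrtr1 ler_sqrt ?ler01 // opnP_le1. Qed.

Lemma xi0_ex : exists xi0, P xi0 = xi0 /\ hn xi0 = 1.
Proof.
case: P_nz => xi1 h1.
set v := P xi1.
have Pv : P v = v by rewrite /v P_idem.
have hv0 : hn v != 0 by apply/eqP => /(hn0_eq0 hH).
have hvp : 0 < hn v by rewrite lt_def hv0 hn_ge0.
exists (((hn v)^-1)%:C *: v); split; first by rewrite (TZ P_lin) Pv.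
rewrite (hnZ hH).
have -> : Num.sqrt (nrm2 ((hn v)^-1)%:C) = (hn v)^-1.
  by rewrite /nrm2 /= expr0n /= addr0 sqrtr_sqr ger0_norm // invr_ge0 ltW.
by rewrite mulVf.
Qed.

Lemma ip_unit xi0 : hn xi0 = 1 -> ip xi0 xi0 = 1.
Proof. by move=> h; rewrite (s_uu (ip_pos hH)) -(hn_sq hH) h expr1n. Qed.

Lemma eip_subl a b w xi : eip (a - b) w xi = eip a w xi - eip b w xi.
Proof.
have -> : a - b = (-1) *: b + a by rewrite scaleN1r addrC.
by rewrite (eip_linl hE) scaleN1r addrC.
Qed.

Lemma eip_subr a b w xi : eip w (a - b) xi = eip w a xi - eip w b xi.
Proof.
apply: (ip_ext hH) => eta.
rewrite (slD (ip_lin hH)) (slN (ip_lin hH)) !(eip_adj hE) eip_subl.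
by rewrite (srD (ip_lin hH) (ip_sym hH)) (srN (ip_lin hH) (ip_sym hH)).
Qed.

Lemma x_fix : x = act P x.
Proof.
have Pc := eip_comp hE x x.
have e1 xi : eip (act P x) x xi = P xi by rewrite (eip_act hE Pc) P_idem.
have e2 xi : eip x (act P x) xi = P xi.
  apply: (ip_ext hH) => eta.
  by rewrite (eip_adj hE (act P x) x xi eta) e1 P_adj.
have e3 xi : eip (act P x) (act P x) xi = P xi by rewrite (eip_act hE Pc) e2 P_idem.
have : x - act P x = 0.
  apply: (eip_def hE) => xi.
  by rewrite eip_subl !eip_subr e1 e2 e3 subrr.
by move/eqP; rewrite subr_eq0 => /eqP.
Qed.

Lemma aP y xi : eip x y xi = P (eip x y xi).
Proof. by rewrite {1}x_fix (eip_act hE (eip_comp hE x x)). Qed.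

Section Xi0.
Variable xi0 : H.
Hypothesis Pxi0 : P xi0 = xi0.
Hypothesis hxi0 : hn xi0 = 1.

Lemma P_form w : P w = ip w xi0 *: xi0.
Proof.
pose T := fun z : H => ip z xi0 *: w.
have Tb : is_bounded_op ip T.
  split.
    by move=> a u v; rewrite /T (ip_lin hH) scalerDl scalerA.
  exists (hn w) => z; rewrite /T (hnZ hH).
  have := ip_CS hH z xi0; rewrite hxi0 mulr1 => h.
  rewrite mulrC; apply: ler_wpM2l => //; exact: hn_ge0.
case: (P_min Tb) => c hc.
have := hc xi0; rewrite Pxi0 /T (ip_unit hxi0) scale1r => e.
have e2 : ip (P w) xi0 = c.
  by rewrite e (slZ (ip_lin hH)) (ip_unit hxi0) mulr1.
by rewrite e -e2 P_adj Pxi0.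
Qed.

Lemma ReJ (t : C) : Rc (t * t^*) = nrm2 t.
Proof. by case: t => a b; rewrite /nrm2 /=; ring. Qed.

Lemma orth_decomp w : ip (w - ip w xi0 *: xi0) xi0 = 0 /\ w = ip w xi0 *: xi0 + (w - ip w xi0 *: xi0).
Proof.
split; last by rewrite addrC subrK.
by rewrite (slD (ip_lin hH)) (slN (ip_lin hH)) (slZ (ip_lin hH)) (ip_unit hxi0) mulr1 subrr.
Qed.

Section Orth.
Variable t : C.
Variable z : H.
Hypothesis hz : ip z xi0 = 0.
Local Notation w := (t *: xi0 + z).

Lemma o_a : ip w xi0 = t.
Proof. by rewrite (ip_lin hH) (ip_unit hxi0) hz mulr1 addr0. Qed.

Lemma o_b : hn w ^+ 2 = nrm2 t + hn z ^+ 2.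
Proof.
rewrite (hn_sq hH) (QfD (ip_lin hH) (ip_sym hH)) (QfZ (ip_lin hH) (ip_sym hH) (ip_pos hH)).
rewrite -(hn_sq hH) hxi0 expr1n mulr1 (hn_sq hH) (slZ (ip_lin hH)) (ip_sym hH z) hz.
have h0 : forall u : C, Rc (u * 0^*) = 0 by move=> [a b] /=; ring.
by rewrite h0 mulr0 addr0.
Qed.

Lemma o_c : Qf (sx ip eip w) x = nrm2 t.
Proof.
rewrite /Qf /sx P_form o_a (slZ (ip_lin hH)) (ip_sym hH w) o_a.
exact: ReJ.
Qed.

Variable y : E.
Local Notation be := (ip (eip x y xi0) xi0).
Local Notation ga := (ip (eip x y z) xi0).

Lemma o_d : sx ip eip w x y = (t * be + ga) * t^*.
Proof.
rewrite /sx aP P_form (slZ (ip_lin hH)) (ip_sym hH w xi0) o_a.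
congr (_ * _).
by rewrite (eip_lin hE) (ip_lin hH).
Qed.

End Orth.

Section Dir.
Variable y : E.
Local Notation be := (ip (eip x y xi0) xi0).
Local Notation Y := (en y).

Lemma F_ineq t z : ip z xi0 = 0 -> 0 < nrm2 t ->
  nrm2 (t * be + ip (eip x y z) xi0) <= Y ^+ 2 * (nrm2 t + hn z ^+ 2).
Proof.
move=> hz nt.
have cs := CS (sx_lin hH hE (t *: xi0 + z)) (sx_sym hH hE _) (sx_pos hE _) x y.
rewrite o_d // o_c // nrm2M nrm2J in cs.
have qy := sx_le hH hE (t *: xi0 + z) y.
rewrite o_b // in qy.
have : nrm2 (t * be + ip (eip x y z) xi0) * nrm2 t <= nrm2 t * (Y ^+ 2 * (nrm2 t + hn z ^+ 2)).
  apply: le_trans cs _; apply: ler_wpM2l => //; exact: nrm2_ge0.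
by rewrite mulrC ler_pM2l.
Qed.

Lemma G_ineq z : ip z xi0 = 0 -> Num.sqrt (nrm2 be) < Y ->
  nrm2 (ip (eip x y z) xi0) <= hn z ^+ 2 * (Y ^+ 2 - nrm2 be).
Proof.
move=> hz hbY.
have b0 : 0 <= nrm2 be := nrm2_ge0 _.
have g0 : 0 <= nrm2 (ip (eip x y z) xi0) := nrm2_ge0 _.
have z0 : 0 <= hn z ^+ 2 := sqr_ge0 _.
have sb0 := sqrtr_ge0 (nrm2 be).
have sb2 := sqr_sqrtr b0.
have Y0 : 0 < Y by lra.
have bY : nrm2 be < Y ^+ 2 by nra.
have [gz|gp] := eqVneq (nrm2 (ip (eip x y z) xi0)) 0.
  by rewrite gz; apply: mulr_ge0 => //; lra.
have [bz|bp] := eqVneq (nrm2 be) 0.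
  have be0 := nrm2_eq0 bz.
  rewrite bz subr0.
  apply: (limit_real (K := Y ^+ 2)) => [|t t0]; first exact: sqr_ge0.
  have := F_ineq (t := t%:C) hz; rewrite nrm2C be0 mulr0 add0r.
  have t2 : 0 < t ^+ 2 by rewrite exprn_gt0.
  move=> /(_ t2) h; apply: le_trans h _.
  by rewrite mulrDr [X in _ <= _ + X]mulrC.
set s := (Y ^+ 2 - nrm2 be)^-1.
have D0 : 0 < Y ^+ 2 - nrm2 be by lra.
have hs : s * (Y ^+ 2 - nrm2 be) = 1 by rewrite /s mulVf // lt0r_neq0.
have s0 : s != 0 by apply/eqP => h; rewrite h mul0r in hs; move/eqP: hs; rewrite eq_sym oner_eq0.
have := F_ineq (t := s%:C * ip (eip x y z) xi0 * be^*) hz.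
rewrite ident_c !nrm2M nrm2J !nrm2C.
have gp' : 0 < nrm2 (ip (eip x y z) xi0) by rewrite lt_def gp.
have bp' : 0 < nrm2 be by rewrite lt_def bp.
have s2 : 0 < s ^+ 2 by rewrite lt_def sqrf_eq0 s0 sqr_ge0.
have pos : 0 < s ^+ 2 * nrm2 (ip (eip x y z) xi0) * nrm2 be by apply: mulr_gt0 => //; apply: mulr_gt0.
move=> /(_ pos) h.
by apply: (G_real Y0 bY g0 b0 z0 hs).
Qed.

Lemma bound l t z : nrm2 l = 1 -> ip z xi0 = 0 -> Num.sqrt (nrm2 be) < Y ->
  Qf (sx ip eip (t *: xi0 + z)) (x + l *: y) <=
  ((1 + Y) ^+ 2 - (Y - Num.sqrt (nrm2 be)) / 2) * hn (t *: xi0 + z) ^+ 2.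
Proof.
move=> nl hz hbY.
have qy := sx_le hH hE (t *: xi0 + z) y.
rewrite o_b // in qy.
rewrite (QfD (sx_lin hH hE _) (sx_sym hH hE _)) (QfZ (sx_lin hH hE _) (sx_sym hH hE _) (sx_pos hE _)) nl mul1r.
rewrite (srZ (sx_lin hH hE _) (sx_sym hH hE _)) o_d // o_c // o_b //.
have hG := G_ineq hz hbY.
have A0 := sqrtr_ge0 (nrm2 t).
have G0 := sqrtr_ge0 (nrm2 (ip (eip x y z) xi0)).
have b0 := sqrtr_ge0 (nrm2 be).
have hA := sqr_sqrtr (nrm2_ge0 t).
have hGs := sqr_sqrtr (nrm2_ge0 (ip (eip x y z) xi0)).
have hbs := sqr_sqrtr (nrm2_ge0 be).
have re : Rc (l^* * ((t * be + ip (eip x y z) xi0) * t^*)) <=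
    (Num.sqrt (nrm2 t) * Num.sqrt (nrm2 be) + Num.sqrt (nrm2 (ip (eip x y z) xi0))) * Num.sqrt (nrm2 t).
  apply: le_trans (Re_le_sqrt_nrm2 _) _.
  rewrite !nrm2M !nrm2J nl mul1r sqrtrM ?nrm2_ge0 //.
  apply: ler_wpM2r => //.
  apply: le_trans (sqrt_nrm2_D _ _) _.
  by rewrite nrm2M sqrtrM ?nrm2_ge0.
set A := Num.sqrt (nrm2 t) in A0 hA re *.
set G := Num.sqrt (nrm2 (ip (eip x y z) xi0)) in G0 hGs re *.
set b := Num.sqrt (nrm2 be) in b0 hbs re hbY *.
rewrite -hGs -hbs in hG.
rewrite -hA in qy *.
have zz := hn_ge0 ip z.
have fr := final_real A0 zz G0 b0 hbY hG.
apply: le_trans fr.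
apply: lerD; first (apply: lerD => //).
by apply: ler_wpM2l.
Qed.

End Dir.

End Xi0.

Lemma enx_eq1 : en x = 1.
Proof.
case: xi0_ex => xi0 [Pxi0 hxi0].
case: (eip_bnd hE x x) => M hM.
have h1 : 1 <= opnorm ip P.
  rewrite -{1}hxi0 -{1}Pxi0; apply: (opn_ub hH hM); by rewrite hxi0.
have e : opnorm ip P = 1 by apply/eqP; rewrite eq_le opnP_le1 h1.
by rewrite /enorm e sqrtr1.
Qed.

Lemma main_only y : norm_parallel ip eip x y ->
  exists xi, hn xi = 1 /\ `|ip (eip x y xi) xi| = (en y)%:C.
Proof.
case=> l [hl heq].
have nl : nrm2 l = 1.
  have : (Num.sqrt (nrm2 l))%:C = 1%:C by rewrite -normc_nrm2 hl.
  move/complexI => h; by rewrite -(sqr_sqrtr (nrm2_ge0 l)) h expr1n.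
case: xi0_ex => xi0 [Pxi0 hxi0].
exists xi0; split => //.
rewrite normc_nrm2; congr (_%:C).
set b := Num.sqrt (nrm2 (ip (eip x y xi0) xi0)).
have b0 : 0 <= b := sqrtr_ge0 _.
have Y0 : 0 <= en y := sqrtr_ge0 _.
have hb : b <= en y.
  have cs := CS (sx_lin hH hE xi0) (sx_sym hH hE xi0) (sx_pos hE xi0) x y.
  have qx : Qf (sx ip eip xi0) x = 1 by rewrite /Qf /sx Pxi0 (ip_unit hxi0).
  have qy := sx_le hH hE xi0 y. rewrite hxi0 expr1n mulr1 in qy.
  rewrite qx mul1r in cs.
  have h := le_trans cs qy.
  apply: sq_le => //; rewrite /b sqr_sqrtr ?nrm2_ge0 //.
apply/eqP; rewrite eq_le hb /=.
rewrite leNgt; apply/negP => hbY.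
have hbnd : forall w, Qf (sx ip eip w) (x + l *: y) <= ((1 + en y) ^+ 2 - (en y - b) / 2) * hn w ^+ 2.
  move=> w; have [hz ew] := orth_decomp hxi0 w.
  rewrite ew; exact: (bound Pxi0 hxi0 _ nl hz hbY).
have d0 : 0 <= (1 + en y) ^+ 2 - (en y - b) / 2.
  have -> : (1 + en y) ^+ 2 - (en y - b) / 2 = 1 + en y * (3 / 2) + en y ^+ 2 + b / 2 by field.
  have : 0 <= en y ^+ 2 := sqr_ge0 _. lra.
have := en_le hH hE d0 hbnd.
rewrite heq enx_eq1 => h.
suff : (1 + en y) ^+ 2 < (1 + en y) ^+ 2 by rewrite ltxx.
lra.
Qed.

Lemma Rc_l (r : R) (c : C) : Rc ((r%:C * c)^* * c) = r * nrm2 c.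
Proof. by case: c => a b; rewrite /nrm2 /=; ring. Qed.

Lemma main_if y xi : hn xi = 1 -> `|ip (eip x y xi) xi| = (en y)%:C ->
  norm_parallel ip eip x y.
Proof.
move=> h1 hc.
have nc : Num.sqrt (nrm2 (ip (eip x y xi) xi)) = en y.
  by move: hc; rewrite normc_nrm2 => /complexI.
have nc2 : nrm2 (ip (eip x y xi) xi) = en y ^+ 2 by rewrite -nc sqr_sqrtr // nrm2_ge0.
have Y0 : 0 <= en y := sqrtr_ge0 _.
have ex0 : 0 <= en x := sqrtr_ge0 _.
have ex1 := enx_le1.
have n1 : nrm2 (1 : C) = 1 by rewrite /nrm2 /=; ring.
have nN1 : nrm2 (-1 : C) = 1 by rewrite /nrm2 /=; ring.
have [Yz|Yp] := eqVneq (en y) 0.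
  exists 1; split; first by rewrite normr1.
  rewrite scale1r Yz addr0.
  apply/eqP; rewrite eq_le; apply/andP; split.
    by have := triangle hH hE x y n1; rewrite scale1r Yz addr0.
  have := triangle hH hE (x + y) y nN1.
  by rewrite scaleN1r addrK Yz addr0.
have Yp' : 0 < en y by rewrite lt_def Yp Y0.
set l := ((en y)^-1)%:C * ip (eip x y xi) xi.
have nl : nrm2 l = 1.
  rewrite /l nrm2M nrm2C nc2 -exprMn mulVf //; exact: expr1n.
exists l; split.
  rewrite normc_nrm2 nl sqrtr1 //.
apply/eqP; rewrite eq_le (triangle hH hE x y nl) /=.
apply: sq_le; [by apply: addr_ge0|exact: sqrtr_ge0|].
have q := sx_le hH hE xi (x + l *: y).
rewrite h1 expr1n mulr1 in q.
apply: le_trans q.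
rewrite (QfD (sx_lin hH hE _) (sx_sym hH hE _)) (QfZ (sx_lin hH hE _) (sx_sym hH hE _) (sx_pos hE _)) nl mul1r.
rewrite (srZ (sx_lin hH hE _) (sx_sym hH hE _)).
have -> : Rc (l^* * sx ip eip xi x y) = en y.
  rewrite /l /sx Rc_l nc2 expr2 mulrA mulVf ?mul1r //.
have cs := CS (sx_lin hH hE xi) (sx_sym hH hE xi) (sx_pos hE xi) x y.
rewrite /sx nc2 in cs.
have qx := sx_le hH hE xi x. rewrite h1 expr1n mulr1 in qx.
have qy := sx_le hH hE xi y. rewrite h1 expr1n mulr1 in qy.
have gx := Qf_ge0 (sx_pos hE xi) x.
have gy := Qf_ge0 (sx_pos hE xi) y.
set Qx := Qf _ x in cs qx gx *.
set Qy := Qf _ y in cs qy gy *.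
set Y := en y in Y0 Yp' cs qy *.
set X := en x in ex0 ex1 qx *.
have X2 : X ^+ 2 <= 1 by nra.
have Qx1 : Qx <= 1 by lra.
have Qy2 : Y ^+ 2 <= Qy by nra.
have Y2 : 0 < Y ^+ 2 by rewrite exprn_gt0.
have Qx1' : 1 <= Qx.
  have : Y ^+ 2 * 1 <= Y ^+ 2 * Qx by nra.
  by rewrite ler_pM2l.
nra.
Qed.

End Main.

Theorem theorem2p4 (R : realType) (H : lmodType R[i]) (ip : H -> H -> R[i])
  (hH : is_hilbert ip)
  (E : lmodType R[i]) (act : (H -> H) -> E -> E) (eip : E -> E -> (H -> H))
  (hE : is_hilbert_KH_module ip act eip)
  (x y : E) (hx : is_minimal_projection ip (eip x x)) :
  norm_parallel ip eip x y <->
  exists xi : H, hnorm ip xi = 1 /\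
    `|ip (eip x y xi) xi| = (enorm ip eip y)%:C.
Proof.
split; first exact: (main_only hH hE hx).
by case=> xi [h1 h2]; exact: (main_if hH hE hx h1 h2).
Qed.
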